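(* Let $(M,d)$ be a complete pointed metric space with at least three distinct points and let $g:\widetilde{M}\to\mathbb{R}$. Then $g$ is bounded and satisfies $d(x,y)g(x,y)\le d(x,u)g(x,u)+d(u,y)g(u,y)$ for all distinct $x,u,y\in M$ if and only if there exists a non-empty bounded set $A\subset\mathrm{Lip}_0(M)$ such that $g(x,y)=\sup_{f\in A}\frac{f(x)-f(y)}{d(x,y)}$ for all $(x,y)\in\widetilde{M}$. Moreover, in this case the continuous extension of $g$ to $\beta\widetilde{M}$ belongs to $G$, and $A$ can be chosen so that the supremum is always attained.
   Context: $\mathrm{Lip}_0(M)$ is the Banach space of Lipschitz $f:M\to\mathbb{R}$ with $f(0)=0$ ($0$ the base point), normed by the Lipschitz constant. $\widetilde{M}=\{(x,y)\in M\times M:x\ne y\}$, $\beta\widetilde{M}$ its Stone–Čech compactification. $G$ is the set of $g\in C(\beta\widetilde{M})$ with $d(x,y)g(x,y)\le d(x,u)g(x,u)+d(u,y)g(u,y)$ for all distinct $x,u,y\in M$. *)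

(* Defs.v *)
From HB Require Import structures.
From mathcomp Require Import all_boot all_order all_algebra.
From mathcomp Require Import all_classical all_reals all_analysis.
Set Implicit Arguments. Unset Strict Implicit. Unset Printing Implicit Defensive.
Import Order.TTheory GRing.Theory Num.Theory numFieldTopology.Exports.
Local Open Scope classical_set_scope.
Local Open Scope ring_scope.

Section Defs.
Context {R : realType} {M : metricType R}.

Definition Mtilde := {p : M * M | p.1 <> p.2}.

Definition mt (x y : M) (h : x <> y) : Mtilde := exist _ (x, y) h.

Definition complete_metric :=
  forall u : nat -> M,
    (forall eps : R, 0 < eps -> exists N : nat,
       forall m n, (N <= m)%N -> (N <= n)%N -> mdist (u m) (u n) < eps) ->
    exists l : M, forall eps : R, 0 < eps -> exists N : nat,
       forall n, (N <= n)%N -> mdist (u n) l < eps.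

Definition lipschitz (f : M -> R) :=
  exists L : R, forall x y, `|f x - f y| <= L * mdist x y.

Definition Lip0 (x0 : M) : set (M -> R) :=
  [set f | f x0 = 0 /\ lipschitz f].

Definition lip_norm (f : M -> R) : R :=
  sup [set r | exists x y, x <> y /\ r = `|f x - f y| / mdist x y].

Definition bounded_in_Lip0 (A : set (M -> R)) :=
  exists C : R, forall f, A f -> lip_norm f <= C.


Definition tri_ineq (g : Mtilde -> R) :=
  forall (x u y : M) (hxu : x <> u) (huy : u <> y) (hxy : x <> y),
    mdist x y * g (mt hxy) <= mdist x u * g (mt hxu) + mdist u y * g (mt huy).

(* (K, e) is a Stone-Cech compactification of the discrete space Mtilde:
   K compact Hausdorff, e has dense range and every bounded real function on
   Mtilde extends continuously to K (C*-embedding). *)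
Definition is_stone_cech (K : topologicalType) (e : Mtilde -> K) :=
  [/\ compact [set: K], hausdorff_space K, dense (range e) &
      forall h : Mtilde -> R, bounded_fun h ->
        exists H : K -> R, continuous H /\ forall p, H (e p) = h p].

Definition Gset (K : topologicalType) (e : Mtilde -> K) : set (K -> R) :=
  [set H | continuous H /\
    forall (x u y : M) (hxu : x <> u) (huy : u <> y) (hxy : x <> y),
      mdist x y * H (e (mt hxy)) <=
        mdist x u * H (e (mt hxu)) + mdist u y * H (e (mt huy))].

End Defs.

(* Main.v *)
Require Import Defs.
From HB Require Import structures.
From mathcomp Require Import all_boot all_order all_algebra.
From mathcomp Require Import all_classical all_reals all_analysis.
From mathcomp Require Import lra.
Import Order.TTheory GRing.Theory Num.Theory numFieldTopology.Exports.
Local Open Scope classical_set_scope.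
Local Open Scope ring_scope.
Set Implicit Arguments. Unset Strict Implicit.

Section Aux.
Context {R : realType} {M : metricType R}.

Definition Dg (g : @Mtilde R M -> R) (z w : M) : R :=
  match pselect (z = w) with left _ => 0 | right h => mdist z w * g (mt h) end.

Lemma DgE g z w (h : z <> w) : Dg g z w = mdist z w * g (mt h).
Proof.
rewrite /Dg; case: pselect => [e|h']; first by [].
by rewrite (Prop_irrelevance h' h).
Qed.

Lemma Dgxx g z : Dg g z z = 0.
Proof. by rewrite /Dg; case: pselect. Qed.

Lemma bound_ex (g : @Mtilde R M -> R) (p : @Mtilde R M) :
  bounded_fun g -> exists C, forall q, `|g q| <= C.
Proof.
move=> hb.
have PF := @globally_properfilter _ [set: @Mtilde R M] p I.
have [C hC] := (@ex_bound _ _ _ g _ PF).1 hb.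
by exists C => q; apply: hC.
Qed.

Lemma bound_fun_of (g : @Mtilde R M -> R) C :
  (forall q, `|g q| <= C) -> bounded_fun g.
Proof.
move=> hC; rewrite /bounded_near.
near=> K => q _; apply: (le_trans (hC q)).
near: K; apply: nbhs_pinfty_ge; exact: num_real.
Unshelve. all: by end_near. Qed.

Lemma third_pt (a b : M) :
  (exists p q r : M, [/\ p <> q, q <> r & p <> r]) ->
  exists u, u <> a /\ u <> b.
Proof.
move=> [p [q [r [pq qr pr]]]].
have [pa|pa] := pselect (p = a); have [pb|pb] := pselect (p = b).
- subst; exists q; split => // e; subst; exact: pq.
- subst. have [qb|qb] := pselect (q = b).
  + subst; exists r; split => // e; subst. exact: pr. exact: qr.
  + exists q; split => // e; subst; exact: pq.
- subst. have [qa|qa] := pselect (q = a).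
  + subst; exists r; split => // e; subst. exact: qr. exact: pr.
  + exists q; split => // e; subst; exact: pq.
- by exists p.
Qed.

Lemma Dg_tri (g : @Mtilde R M -> R) :
  (exists p q r : M, [/\ p <> q, q <> r & p <> r]) -> tri_ineq g ->
  forall a b c, Dg g a c <= Dg g a b + Dg g b c.
Proof.
move=> three tri.
have dist3 : forall a b c, a <> b -> b <> c -> a <> c ->
    Dg g a c <= Dg g a b + Dg g b c.
  move=> a b c ab bc ac; rewrite (DgE g ab) (DgE g bc) (DgE g ac); exact: tri.
have sym : forall a b, 0 <= Dg g a b + Dg g b a.
  move=> a b; have [->|ab] := pselect (a = b); first by rewrite Dgxx addr0.
  have [u [ua ub]] := third_pt a b three.
  have h1 := dist3 a b u ab (nesym ub) (nesym ua).
  have h2 := dist3 b a u (nesym ab) (nesym ua) (nesym ub).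
  lra.
move=> a b c.
have [ac|ac] := pselect (a = c).
  subst; rewrite Dgxx; exact: sym.
have [ab|ab] := pselect (a = b).
  by subst; rewrite Dgxx add0r.
have [bc|bc] := pselect (b = c).
  by subst; rewrite Dgxx addr0.
exact: dist3.
Qed.

Lemma Dg_bound (g : @Mtilde R M -> R) C :
  (forall q, `|g q| <= C) -> forall z w, `|Dg g z w| <= C * mdist z w.
Proof.
move=> hC z w; have [->|h] := pselect (z = w).
  by rewrite Dgxx mdistxx mulr0 normr0.
rewrite (DgE g h) normrM ger0_norm ?mdist_ge0 // mulrC.
by apply: ler_wpM2r; [exact: mdist_ge0 | exact: hC].
Qed.

Lemma construct (x0 : M) (g : @Mtilde R M -> R)
  (three : exists a b c : M, [/\ a <> b, b <> c & a <> c]) :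
  bounded_fun g -> tri_ineq g ->
    exists A : set (M -> R),
      [/\ A `<=` Lip0 x0, A !=set0, bounded_in_Lip0 A &
          forall (x y : M) (hxy : x <> y),
            g (mt hxy) = sup [set (f x - f y) / mdist x y | f in A] /\
            exists2 f, A f & g (mt hxy) = (f x - f y) / mdist x y].
Proof.
move=> hb tri.
have [a [b [c [ab _ _]]]] := three.
have [C hC] := bound_ex (mt ab) hb.
have T := Dg_tri three tri. have B := Dg_bound hC.
pose F b := fun z => Dg g z b - Dg g x0 b.
have Fdiff : forall b z w, F b z - F b w = Dg g z b - Dg g w b.
  by move=> *; rewrite /F; lra.
have Fle : forall b z w, F b z - F b w <= Dg g z w.
  by move=> b' z w; rewrite Fdiff; have := T z w b'; lra.
have Flip : forall b z w, `|F b z - F b w| <= C * mdist z w.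
  move=> b' z w; have := Fle b' z w; have := Fle b' w z.
  move: (B z w) (B w z); rewrite !ler_norml [mdist w z]metric_sym.
  move=> /andP[? ?] /andP[? ?]; lra.
exists [set f | exists b, f = F b]; split.
- move=> f [b' ->]; split; first by rewrite /F subrr.
  by exists C => x y; exact: Flip.
- by exists (F x0), x0.
- exists C => f [b' ->]; rewrite /lip_norm; apply: ge_sup.
    by exists (`|F b' a - F b' b| / mdist a b), a, b.
  move=> r [x [y [xy ->]]].
  rewrite ler_pdivrMr ?mdist_gt0; last by apply/eqP.
  exact: Flip.
- move=> x y hxy.
  have d0 : 0 < mdist x y by rewrite mdist_gt0; apply/eqP.
  have gE : g (mt hxy) = (F y x - F y y) / mdist x y.
    rewrite Fdiff Dgxx subr0 (DgE g hxy) [mdist x y * _]mulrC mulfK //.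
    by rewrite gt_eqF.
  have ub : ubound [set (f x - f y) / mdist x y | f in [set f | exists b, f = F b]]
      (g (mt hxy)).
    move=> r [f [b' ->] <-]; rewrite ler_pdivrMr //.
    by apply: le_trans (Fle b' x y) _; rewrite (DgE g hxy) mulrC.
  have mem : [set (f x - f y) / mdist x y | f in [set f | exists b, f = F b]]
      (g (mt hxy)).
    by rewrite gE; exists (F y) => //; exists y.
  split; last by exists (F y); [exists y | ].
  apply/eqP; rewrite eq_le; apply/andP; split.
  + apply: sup_upper_bound => //; split; by exists (g (mt hxy)).
  + by apply: ge_sup => //; exists (g (mt hxy)).
Qed.

Lemma converse (x0 : M) (g : @Mtilde R M -> R)
  (three : exists a b c : M, [/\ a <> b, b <> c & a <> c]) :
    (exists A : set (M -> R),
      [/\ A `<=` Lip0 x0, A !=set0, bounded_in_Lip0 A &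
          forall (x y : M) (hxy : x <> y),
            g (mt hxy) = sup [set (f x - f y) / mdist x y | f in A]]) ->
  bounded_fun g /\ tri_ineq g.
Proof.
move=> [A [hA [f0 Af0] [C hC] hg]].
have elem : forall f x y, x <> y -> A f -> `|f x - f y| <= C * mdist x y.
  move=> f x y h Af.
  have d0 : 0 < mdist x y by rewrite mdist_gt0; apply/eqP.
  rewrite -ler_pdivrMr //; apply: le_trans (hC f Af).
  have [_ [L hL]] := hA f Af.
  apply: sup_upper_bound; last by exists x, y.
  split; first by exists (`|f x - f y| / mdist x y), x, y.
  exists L => r [x' [y' [h' ->]]].
  rewrite ler_pdivrMr ?mdist_gt0; last by apply/eqP.
  exact: hL.
have lo : forall f x y, x <> y -> A f -> - C <= (f x - f y) / mdist x y.
  move=> f x y h Af.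
  have d0 : 0 < mdist x y by rewrite mdist_gt0; apply/eqP.
  rewrite ler_pdivlMr //; have := elem f x y h Af; rewrite ler_norml.
  move=> /andP[? ?]; lra.
have hi : forall f x y, x <> y -> A f -> (f x - f y) / mdist x y <= C.
  move=> f x y h Af.
  have d0 : 0 < mdist x y by rewrite mdist_gt0; apply/eqP.
  rewrite ler_pdivrMr //; have := elem f x y h Af; rewrite ler_norml.
  move=> /andP[? ?]; lra.
have hs : forall x y, x <> y ->
    has_sup [set (f x - f y) / mdist x y | f in A].
  move=> x y h; split; first by exists ((f0 x - f0 y) / mdist x y), f0.
  by exists C => r [f Af <-]; exact: hi.
split.
  apply: (@bound_fun_of _ C) => -[[x y] h].
  rewrite (hg x y h) ler_norml; apply/andP; split.
    apply: le_trans (lo f0 x y h Af0) _.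
    by apply: sup_upper_bound; [exact: hs | exists f0].
  by apply: ge_sup; [exists ((f0 x - f0 y) / mdist x y), f0 | move=> r [f Af <-]; exact: hi].
move=> x u y hxu huy hxy; rewrite !hg.
have d0 : 0 < mdist x y by rewrite mdist_gt0; apply/eqP.
rewrite mulrC -ler_pdivlMr //.
apply: ge_sup; first by exists ((f0 x - f0 y) / mdist x y), f0.
move=> r [f Af <-].
rewrite ler_pM2r ?invr_gt0 //.
have h1 : (f x - f u) / mdist x u <= sup [set (f' x - f' u) / mdist x u | f' in A]
  by apply: sup_upper_bound; [exact: hs | exists f].
have h2 : (f u - f y) / mdist u y <= sup [set (f' u - f' y) / mdist u y | f' in A]
  by apply: sup_upper_bound; [exact: hs | exists f].
have dxu : 0 < mdist x u by rewrite mdist_gt0; apply/eqP.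
have duy : 0 < mdist u y by rewrite mdist_gt0; apply/eqP.
rewrite ler_pdivrMr // in h1; rewrite ler_pdivrMr // in h2.
rewrite [mdist x u * _]mulrC [mdist u y * _]mulrC; lra.
Qed.

End Aux.

Theorem proposition2p7 (R : realType) (M : metricType R) (x0 : M)
  (Mcomplete : @complete_metric R M)
  (three_pts : exists a b c : M, [/\ a <> b, b <> c & a <> c])
  (g : @Mtilde R M -> R) :
  ((bounded_fun g /\ tri_ineq g) <->
    exists A : set (M -> R),
      [/\ A `<=` Lip0 x0, A !=set0, bounded_in_Lip0 A &
          forall (x y : M) (hxy : x <> y),
            g (mt hxy) = sup [set (f x - f y) / mdist x y | f in A]])
  /\
  ((bounded_fun g /\ tri_ineq g) ->
    (forall (K : topologicalType) (e : @Mtilde R M -> K),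
       is_stone_cech e ->
       forall H : K -> R, continuous H -> (forall p, H (e p) = g p) ->
         Gset e H)
    /\
    exists A : set (M -> R),
      [/\ A `<=` Lip0 x0, A !=set0, bounded_in_Lip0 A &
          forall (x y : M) (hxy : x <> y),
            g (mt hxy) = sup [set (f x - f y) / mdist x y | f in A] /\
            exists2 f, A f & g (mt hxy) = (f x - f y) / mdist x y]).
Proof.
split.
  split; last exact: converse.
  move=> [hb tri]; have [A [h1 h2 h3 h4]] := construct x0 three_pts hb tri.
  by exists A; split => // x y hxy; have [] := h4 x y hxy.
move=> [hb tri]; split; last exact: construct.
move=> K e _ H cH He; split => // x u y hxu huy hxy; rewrite !He; exact: tri.
Qed.
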